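(* Let $G$ be a finite simple complete bipartite graph $K_{m,n}$ with $m,n\ge 1$. If $G$ has a set graceful labeling (with respect to some finite set $X$), then $G$ is a star, i.e., $m=1$ or $n=1$.
   Context: All graphs are finite and simple. Let $G$ be a graph with vertex set $V$ and edge set $E$, let $X$ be a set and $\mathcal{P}(X)$ its power set. For a function $f:V\to\mathcal{P}(X)$ define $\hat f:E\to\mathcal{P}(X)$ by $\hat f(xy)=f(x)\,\Delta\, f(y)$, where $A\Delta B$ denotes the symmetric difference of sets $A$ and $B$. The function $f$ is a set graceful labeling of $G$ if both $f$ and $\hat f$ are injective and the range of $\hat f$ is exactly $\mathcal{P}(X)\setminus\{\emptyset\}$. *)

(* Defs.v *)
From mathcomp Require Import all_boot.
Set Implicit Arguments. Unset Strict Implicit. Unset Printing Implicit Defensive.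

Definition simple_graph (V : finType) (adj : rel V) : Prop :=
  symmetric adj /\ irreflexive adj.

Definition symdiff (X : finType) (A B : {set X}) : {set X} := (A :\: B) :|: (B :\: A).

(* The induced edge labeling fhat(xy) = f x Δ f y (well defined since symdiff
   is symmetric): we express it on endpoints. *)
Definition set_graceful (V X : finType) (adj : rel V) (f : V -> {set X}) : Prop :=
  injective f /\
  (forall x y u v, adj x y -> adj u v ->
      symdiff (f x) (f y) = symdiff (f u) (f v) -> [set x; y] = [set u; v]) /\
  (* range of fhat is exactly P(X) \ {empty} *)
  (forall x y, adj x y -> symdiff (f x) (f y) != set0) /\
  (forall S : {set X}, S != set0 -> exists x y, adj x y /\ symdiff (f x) (f y) = S).

Definition Kmn_adj (m n : nat) : rel ('I_m + 'I_n) :=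
  fun a b => match a, b with
             | inl _, inr _ | inr _, inl _ => true
             | _, _ => false
             end.

(* Main.v *)
Require Import Defs.
From mathcomp Require Import all_boot all_algebra.
From Stdlib Require Import Lia.
Import GRing.Theory Num.Theory.
Set Implicit Arguments. Unset Strict Implicit. Unset Printing Implicit Defensive.

Definition par (X : finType) (S T : {set X}) : bool := odd #|S :&: T|.
Definition chi (X : finType) (S T : {set X}) : int := ((-1) ^+ par S T)%R.

Lemma parC (X : finType) (S T : {set X}) : par S T = par T S.
Proof. by rewrite /par setIC. Qed.

Lemma chiC (X : finType) (S T : {set X}) : chi S T = chi T S.
Proof. by rewrite /chi parC. Qed.

Lemma par_symdiff (X : finType) (A B T : {set X}) :
  par (symdiff A B) T = par A T (+) par B T.
Proof.
rewrite /par.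
have E1 := cardsID B (A :&: T).
have E2 := cardsID A (B :&: T).
have E3 : (A :&: T) :&: B = (B :&: T) :&: A.
  by apply/setP => x; rewrite !inE; case: (x \in A); case: (x \in B); case: (x \in T).
have E4 : symdiff A B :&: T = ((A :&: T) :\: B) :|: ((B :&: T) :\: A).
  by apply/setP => x; rewrite /symdiff !inE; case: (x \in A); case: (x \in B); case: (x \in T).
have E5 : #|((A :&: T) :\: B) :|: ((B :&: T) :\: A)| =
          #|(A :&: T) :\: B| + #|(B :&: T) :\: A|.
  rewrite cardsU.
  have -> : ((A :&: T) :\: B) :&: ((B :&: T) :\: A) = set0.
    by apply/setP => x; rewrite !inE; case: (x \in A); case: (x \in B); case: (x \in T).
  by rewrite cards0 subn0.
rewrite E4 E5 -E1 -E2 E3 !oddD.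
by case: (odd _); case: (odd _); case: (odd _).
Qed.

Lemma chi_symdiff (X : finType) (A B T : {set X}) :
  chi (symdiff A B) T = (chi A T * chi B T)%R.
Proof. by rewrite /chi par_symdiff signr_addb. Qed.

Lemma chi0 (X : finType) (T : {set X}) : chi set0 T = 1%R.
Proof. by rewrite /chi /par set0I cards0. Qed.

Lemma symdiffI (X : finType) (A : {set X}) : symdiff A A = set0.
Proof. by apply/setP => x; rewrite /symdiff !inE; case: (x \in A). Qed.

Lemma symdiff0 (X : finType) (A B : {set X}) : symdiff A B = set0 -> A = B.
Proof.
move/setP => H; apply/setP => x; move: (H x).
by rewrite /symdiff !inE; case: (x \in A); case: (x \in B).
Qed.

Lemma symdiffC (X : finType) (A B : {set X}) : symdiff A B = symdiff B A.
Proof. by rewrite /symdiff setUC. Qed.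

Lemma chi_sum (X : finType) (S : {set X}) : S != set0 ->
  (\sum_(T : {set X}) chi S T = 0)%R.
Proof.
case/set0Pn => x Sx.
set s := (\sum_(T : {set X}) chi S T)%R.
have Hs : s = (- s)%R.
  rewrite {1}/s (reindex_inj (h := fun T => symdiff T [set x])); last first.
    apply: (can_inj (g := fun T => symdiff T [set x])) => T.
    by apply/setP => y; rewrite /symdiff !inE; case: (y \in T); case: (y == x).
  rewrite -sumrN; apply: eq_bigr => T _.
  rewrite chiC chi_symdiff [chi [set x] S]/chi /par.
  have -> : [set x] :&: S = [set x].
    by apply/setP => y; rewrite !inE; case: eqP => // ->.
  by rewrite cards1 /= expr1 mulrN1 chiC.
have : (s *+ 2 == 0)%R.
  by rewrite mulr2n {1}Hs addNr.
by rewrite mulrn_eq0 /= => /eqP.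
Qed.

Lemma int_sq1 (x y : int) : (x * y = -1)%R -> (x ^+ 2 = 1)%R.
Proof.
move=> H; have := congr1 absz H; rewrite abszM /= => /eqP; rewrite muln_eq1.
by case/andP => /eqP; case: x {H} => [[|[|k]]|[|k]].
Qed.

Theorem mainTheorem1 (m n : nat) (X : finType) :
  1 <= m -> 1 <= n ->
  (exists f : 'I_m + 'I_n -> {set X}, @set_graceful _ X (@Kmn_adj m n) f) ->
  m = 1 \/ n = 1.
Proof.
move=> m1 n1 [f [finj [fedge [fne fsurj]]]].
pose a i := f (inl i). pose b j := f (inr j).
pose g (p : 'I_m * 'I_n) := symdiff (a p.1) (b p.2).
have ginj : injective g.
  move=> [i j] [i' j'] H.
  have := fedge (inl i) (inr j) (inl i') (inr j') isT isT H.
  move/setP => E; move: (E (inl i)) (E (inr j)); rewrite !inE !eqxx /= ?orbT.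
  by move=> /esym/orP [/eqP [->] | /eqP //] /esym/eqP [->].
have gim : g @: setT = [set S | S != set0].
  apply/setP => S; rewrite inE; apply/imsetP/idP.
    by case=> [[i j]] _ ->; apply: fne.
  move=> /fsurj [x [y [Hxy HS]]].
  case: x y Hxy HS => x [] y //= _ HS.
    by exists (x, y).
  by exists (y, x) => //; rewrite /g symdiffC.
have edge : forall F : {set X} -> int,
    (\sum_i \sum_j F (symdiff (a i) (b j)) = \sum_(S | S != set0) F S)%R.
  move=> F; rewrite pair_bigA /=.
  transitivity (\sum_(p in [set: 'I_m * 'I_n]) F (g p))%R.
    by apply: eq_bigl => p; rewrite in_setT.
  rewrite -(big_imset _ (in2W ginj)) gim.
  by apply: eq_bigl => S; rewrite inE.
pose sA T := (\sum_(i < m) chi (a i) T)%R.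
pose sB T := (\sum_(j < n) chi (b j) T)%R.
have prod : forall T, (sA T * sB T = \sum_(S | S != set0) chi S T)%R.
  move=> T; rewrite -edge /sA /sB mulr_suml; apply: eq_bigr => i _.
  by rewrite mulr_sumr; apply: eq_bigr => j _; rewrite chi_symdiff.
pose N := #|{set X}|.
pose K := (\sum_(T : {set X} | T != set0) (1 : int))%R.
have NK : ((N%:R)%R = 1 + K)%R.
  have : (\sum_(T : {set X}) (1:int) = (N%:R)%R)%R by rewrite sumr_const.
  by rewrite (bigD1 set0) //= => <-.
have sA0 : sA set0 = (m%:R)%R.
  rewrite /sA (eq_bigr (fun _ => 1%R)) ?sumr_const ?card_ord // => i _.
  by rewrite chiC chi0.
have sB0 : sB set0 = (n%:R)%R.
  rewrite /sB (eq_bigr (fun _ => 1%R)) ?sumr_const ?card_ord // => i _.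
  by rewrite chiC chi0.
have mnK : (((m * n)%:R)%R = K)%R.
  rewrite natrM -sA0 -sB0 prod /K; apply: eq_bigr => S _.
  by rewrite chiC chi0.
have sq1 : forall T, T != set0 -> (sA T ^+ 2 = 1)%R.
  move=> T T0; apply: (@int_sq1 _ (sB T)); rewrite prod.
  have := chi_sum T0; rewrite (bigD1 set0) //= chiC chi0.
  under eq_bigr do rewrite chiC.
  by move/eqP; rewrite addrC addr_eq0 => /eqP.
have pars : (\sum_T sA T ^+ 2 = ((m * N)%:R)%R)%R.
  transitivity (\sum_(i < m) \sum_(i' < m) \sum_T chi (symdiff (a i) (a i')) T)%R.
    symmetry; under eq_bigr do rewrite exchange_big.
    rewrite exchange_big; apply: eq_bigr => T _.
    rewrite expr2 /sA mulr_suml; apply: eq_bigr => i' _.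
    by rewrite mulr_sumr; apply: eq_bigr => j _; rewrite chi_symdiff.
  transitivity (\sum_(i < m) ((N%:R)%R : int))%R; last first.
    by rewrite sumr_const card_ord natrM mulr_natl.
  apply: eq_bigr => i _.
  rewrite (bigD1 i) //= [X in (_ + X)%R]big1 ?addr0.
    rewrite symdiffI (eq_bigr (fun _ => 1%R)) ?sumr_const // => T _.
    by rewrite chi0.
  move=> i' ii'; apply: chi_sum; apply/eqP => /symdiff0 /finj [] /eqP.
  by rewrite eq_sym (negbTE ii').
move: pars; rewrite (bigD1 set0) //= sA0.
rewrite (eq_bigr (fun _ => 1%R)); last by move=> T /sq1.
rewrite -/K -mnK -natrX -natrD => /eqP; rewrite eqr_nat => /eqP E1.
move: NK; rewrite -mnK (_ : 1%R = 1%:R)%R // -natrD => /eqP; rewrite eqr_nat => /eqP E2.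
rewrite E2 in E1.
have E3 : m + n = 1 + m * n.
  apply/eqP; rewrite -(eqn_pmul2l m1); apply/eqP.
  by rewrite mulnDr E1 mulnDr muln1.
move/leP: m1; move/leP: n1; move: E3; rewrite -!plusE -!multE => E3 h1 h2.
destruct m as [|m']; [lia|]; destruct n as [|n']; [lia|].
clear E1.
have H : (m' * n')%coq_nat = 0 by nia.
destruct m' as [|m'']; [by left|]; destruct n' as [|n'']; [by right|].
simpl in H; lia.
Qed.
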